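(* Under Assumption A with $T>0$, let $\bar\alpha\in(\alpha_\nu-1/T,+\infty)$ be any solution of the fixed point equation $\alpha=\alpha_\nu-\frac1T+\frac{G(\alpha,2)}{2T^2}$. Then $$\frac{\alpha_\nu}{2}-\frac1T-\frac{L}{2T^2\alpha_\nu\beta_\mu}+\frac12\sqrt{\Big(\alpha_\nu+\frac{L}{T^2\beta_\mu\alpha_\nu}\Big)^2+\frac{4\alpha_\nu}{T^2\beta_\mu}}\;\le\;\bar\alpha\;\le\;\frac{\alpha_\nu}{2}-\frac1T+\frac12\sqrt{\alpha_\nu^2+\frac{4\alpha_\nu}{T^2\beta_\mu}}.$$
   Context: For $L>0$ let $f_L(r)=2L^{1/2}\tanh(rL^{1/2}/2)$ for $r\ge0$. For a differentiable $U:\mathbb{R}^d\to\mathbb{R}$ and $r>0$ let $\kappa_U(r)=\inf\{|x-y|^{-2}\langle\nabla U(x)-\nabla U(y),x-y\rangle:|x-y|=r\}$. Assumption A: $\mu(\mathrm{d}x)=e^{-U^\mu(x)}\mathrm{d}x$, $\nu(\mathrm{d}y)=e^{-U^\nu(y)}\mathrm{d}y$ probability measures on $\mathbb{R}^d$, $U^\mu,U^\nu\in C^2$; $\mu$ has finite second moment and finite entropy w.r.t. Lebesgue, and $\langle v,\nabla^2U^\mu(x)v\rangle\le\beta_\mu|v|^2$ for all $x,v$ with $\beta_\mu>0$; and there exist $\alpha_\nu>0,L>0$ with $\kappa_{U^\nu}(r)\ge\alpha_\nu-r^{-1}f_L(r)$ for all $r>0$. For $\alpha\ge\alpha_\nu-1/T$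 define $F(\alpha,s)=\beta_\mu s+\frac{s}{T(1+T\alpha)}+\frac{s^{1/2}f_L(s^{1/2})}{(1+T\alpha)^2}$ for $s>0$, and $G(\alpha,u)=\inf\{s\ge0:F(\alpha,s)\ge u\}$ for $u>0$. *)

(* Defs.v *)
From Stdlib Require Import Reals.
From Coquelicot Require Import Coquelicot.
Open Scope R_scope.

Definition tanhR (x : R) : R := (exp x - exp (- x)) / (exp x + exp (- x)).

Definition f_L (L r : R) : R := 2 * sqrt L * tanhR (r * sqrt L / 2).

Definition F_fun (beta_mu L T alpha s : R) : R :=
  beta_mu * s + s / (T * (1 + T * alpha))
  + sqrt s * f_L L (sqrt s) / (1 + T * alpha) ^ 2.

Definition G_fun (beta_mu L T alpha u : R) : Rbar :=
  Glb_Rbar (fun s => 0 <= s /\ u <= F_fun beta_mu L T alpha s).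

(* Main.v *)
Require Import Defs.
From Stdlib Require Import Reals Lra.
From Coquelicot Require Import Coquelicot.
Open Scope R_scope.

Lemma h_nonneg y : 0 <= y -> exp y - exp (-y) <= y * (exp y + exp (-y)).
Proof.
intros Hy.
set (h := fun t => t * (exp t + exp (-t)) - (exp t - exp (-t))).
assert (Hd : forall t, is_derive h t (t * (exp t - exp (-t)))).
{ intro t. unfold h. auto_derive. auto. ring. }
destruct (MVT_gen h 0 y (fun t => t * (exp t - exp (-t)))) as [c [Hc Heq]].
- intros; apply Hd.
- intros x _. apply continuity_pt_filterlim.
  apply (ex_derive_continuous (K:=R_AbsRing) (V:=R_NormedModule)).
  eexists; apply Hd.
- rewrite Rmin_left in Hc by lra. rewrite Rmax_right in Hc by lra.
  assert (exp (-c) <= exp c) by (destruct (Req_dec c 0); [subst; rewrite Ropp_0; lra| left; apply exp_increasing; lra]).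
  assert (0 <= c * (exp c - exp (-c))) by (apply Rmult_le_pos; lra).
  unfold h in Heq. replace (0 * (exp 0 + exp (-0)) - (exp 0 - exp (-0))) with 0 in Heq
    by (rewrite Ropp_0; ring).
  nra.
Qed.

Lemma fL_bounds L r : 0 < L -> 0 <= r -> 0 <= f_L L r <= L * r.
Proof.
intros HL Hr. unfold f_L, tanhR.
set (y := r * sqrt L / 2).
assert (Hs : 0 < sqrt L) by (apply sqrt_lt_R0; lra).
assert (HsL : sqrt L * sqrt L = L) by (apply sqrt_sqrt; lra).
assert (Hy : 0 <= y) by (unfold y; apply Rmult_le_pos; [apply Rmult_le_pos|]; lra).
assert (H1 : exp (-y) <= exp y) by (destruct (Req_dec y 0) as [E|E];
  [rewrite E, Ropp_0; lra| left; apply exp_increasing; lra]).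
assert (H2 := exp_pos y). assert (H3 := exp_pos (-y)).
assert (H4 := h_nonneg y Hy).
set (a := exp y) in *. set (b := exp (-y)) in *.
split.
- apply Rmult_le_pos; [lra|]. apply Rmult_le_pos; [lra|]. left; apply Rinv_0_lt_compat; lra.
- assert ((a - b) / (a + b) <= y).
  { apply Rmult_le_reg_r with (a+b); [lra|]. unfold Rdiv. rewrite Rmult_assoc, Rinv_l by lra. lra. }
  apply Rle_trans with (2 * sqrt L * y). apply Rmult_le_compat_l; lra.
  unfold y. nra.
Qed.

Lemma F_bounds beta L T al s : 0 < L -> 0 <= s -> 0 < 1 + T * al ->
  (beta + 1 / (T * (1 + T * al))) * s <= F_fun beta L T al s <=
  (beta + 1 / (T * (1 + T * al)) + L / (1 + T * al) ^ 2) * s.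
Proof.
intros HL Hs Hc. unfold F_fun.
destruct (fL_bounds L (sqrt s) HL (sqrt_pos s)) as [A B].
assert (HsL : sqrt s * sqrt s = s) by (apply sqrt_sqrt; lra).
assert (0 <= sqrt s * f_L L (sqrt s) <= L * s).
{ split. apply Rmult_le_pos; auto; apply sqrt_pos.
  assert (0 <= sqrt s) by apply sqrt_pos.
  apply Rle_trans with (sqrt s * (L * sqrt s)). apply Rmult_le_compat_l; lra.
  replace (sqrt s * (L * sqrt s)) with (L * (sqrt s * sqrt s)) by ring. rewrite HsL. lra. }
assert (P : 0 < (1 + T * al) ^ 2) by (apply pow_lt; lra).
unfold Rdiv. split.
- assert (0 <= sqrt s * f_L L (sqrt s) * / (1 + T * al) ^ 2).
  { apply Rmult_le_pos; [lra|]. left; apply Rinv_0_lt_compat; lra. }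
  nra.
- assert (sqrt s * f_L L (sqrt s) * / (1 + T * al) ^ 2 <= L * s * / (1 + T * al) ^ 2).
  { apply Rmult_le_compat_r; [left; apply Rinv_0_lt_compat; lra| lra]. }
  nra.
Qed.

Theorem mainTheorem2 (beta_mu alpha_nu L T abar : R)
  (hbeta : 0 < beta_mu) (halpha : 0 < alpha_nu) (hL : 0 < L) (hT : 0 < T)
  (hrange : alpha_nu - 1 / T < abar)
  (hfix : exists g : R, G_fun beta_mu L T abar 2 = Finite g /\
          abar = alpha_nu - 1 / T + g / (2 * T ^ 2)) :
  alpha_nu / 2 - 1 / T - L / (2 * T ^ 2 * alpha_nu * beta_mu)
    + / 2 * sqrt ((alpha_nu + L / (T ^ 2 * beta_mu * alpha_nu)) ^ 2
                  + 4 * alpha_nu / (T ^ 2 * beta_mu))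
  <= abar <=
  alpha_nu / 2 - 1 / T + / 2 * sqrt (alpha_nu ^ 2 + 4 * alpha_nu / (T ^ 2 * beta_mu)).
Proof.
destruct hfix as [g [Hg Hab]].
set (z := g / (2 * T ^ 2)) in Hab.
assert (Hz : 0 < z) by lra.
assert (Hgz : g = 2 * T ^ 2 * z) by (unfold z; field; lra).
assert (Hc : 1 + T * abar = T * (alpha_nu + z)) by (rewrite Hab; field; lra).
assert (Hcp : 0 < 1 + T * abar) by (rewrite Hc; apply Rmult_lt_0_compat; lra).
set (K1 := beta_mu + 1 / (T * (1 + T * abar))).
set (K2 := K1 + L / (1 + T * abar) ^ 2).
assert (HK1 : 0 < K1).
{ unfold K1. assert (0 < 1 / (T * (1 + T * abar))).
  { apply Rdiv_lt_0_compat; [lra|]. apply Rmult_lt_0_compat; lra. } lra. }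
assert (HK2 : K1 <= K2).
{ unfold K2. assert (0 <= L / (1 + T * abar) ^ 2).
  { apply Rdiv_le_0_compat; [lra|]. apply pow_lt; lra. } lra. }
destruct (Glb_Rbar_correct (fun s => 0 <= s /\ 2 <= F_fun beta_mu L T abar s)) as [Hlb Hglb].
unfold G_fun in Hg. rewrite Hg in Hlb, Hglb.
assert (Up : g * K1 <= 2).
{ assert (Hm : (fun s => 0 <= s /\ 2 <= F_fun beta_mu L T abar s) (2 / K1)).
  { split. apply Rdiv_le_0_compat; lra.
    destruct (F_bounds beta_mu L T abar (2 / K1) hL ltac:(apply Rdiv_le_0_compat; lra) Hcp) as [A _].
    fold K1 in A. replace (K1 * (2 / K1)) with 2 in A by (field; lra). lra. }
  specialize (Hlb _ Hm). simpl in Hlb.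
  apply Rmult_le_compat_r with (r := K1) in Hlb; [|lra].
  replace (2 / K1 * K1) with 2 in Hlb by (field; lra). lra. }
assert (Lo : 2 <= g * K2).
{ assert (Hb : is_lb_Rbar (fun s => 0 <= s /\ 2 <= F_fun beta_mu L T abar s) (2 / K2)).
  { intros s [Hs Hf]. simpl.
    destruct (F_bounds beta_mu L T abar s hL Hs Hcp) as [_ B]. fold K1 K2 in B.
    apply Rmult_le_reg_r with K2; [lra|].
    replace (2 / K2 * K2) with 2 by (field; lra). lra. }
  specialize (Hglb _ Hb). simpl in Hglb.
  apply Rmult_le_compat_r with (r := K2) in Hglb; [|lra].
  replace (2 / K2 * K2) with 2 in Hglb by (field; lra). lra. }
unfold K2, K1 in *. rewrite Hc, Hgz in *. clear Hg Hlb Hglb Hc Hcp HK1 HK2.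
assert (Hza : 0 < alpha_nu + z) by lra.
assert (Q1 : T ^ 2 * beta_mu * z ^ 2 + T ^ 2 * beta_mu * alpha_nu * z - alpha_nu <= 0).
{ replace (2 * T ^ 2 * z * (beta_mu + 1 / (T * (T * (alpha_nu + z)))))
    with (2 * (T ^ 2 * beta_mu * z + z / (alpha_nu + z))) in Up by (field; lra).
  assert (T ^ 2 * beta_mu * z + z / (alpha_nu + z) <= 1) by lra.
  apply Rmult_le_compat_r with (r := alpha_nu + z) in H; [|lra].
  replace ((T ^ 2 * beta_mu * z + z / (alpha_nu + z)) * (alpha_nu + z))
    with (T ^ 2 * beta_mu * z * (alpha_nu + z) + z) in H by (field; lra). nra. }
assert (Q2 : 0 <= T ^ 2 * beta_mu * alpha_nu * z ^ 2 + (T ^ 2 * beta_mu * alpha_nu ^ 2 + L) * z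
              - T ^ 2 * beta_mu * alpha_nu ^ 2 * 0 - alpha_nu ^ 2).
{ replace (2 * T ^ 2 * z * (beta_mu + 1 / (T * (T * (alpha_nu + z))) + L / (T * (alpha_nu + z)) ^ 2))
    with (2 * (T ^ 2 * beta_mu * z + z / (alpha_nu + z) + L * z / (alpha_nu + z) ^ 2)) in Lo
    by (field; lra).
  assert (E : L * z / (alpha_nu + z) ^ 2 <= L * z / (alpha_nu * (alpha_nu + z))).
  { apply Rmult_le_compat_l. apply Rmult_le_pos; lra.
    apply Rinv_le_contravar. apply Rmult_lt_0_compat; lra. nra. }
  assert (1 <= T ^ 2 * beta_mu * z + z / (alpha_nu + z) + L * z / (alpha_nu * (alpha_nu + z))) by lra.
  apply Rmult_le_compat_r with (r := alpha_nu * (alpha_nu + z)) in H; [|apply Rmult_le_pos; lra].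
  replace ((T ^ 2 * beta_mu * z + z / (alpha_nu + z) + L * z / (alpha_nu * (alpha_nu + z))) * (alpha_nu * (alpha_nu + z)))
    with (T ^ 2 * beta_mu * z * alpha_nu * (alpha_nu + z) + z * alpha_nu + L * z) in H by (field; lra).
  nra. }
assert (HT2 : 0 < T ^ 2) by (apply pow_lt; lra).
split.
- set (B := alpha_nu + L / (T ^ 2 * beta_mu * alpha_nu)).
  set (D := B ^ 2 + 4 * alpha_nu / (T ^ 2 * beta_mu)).
  assert (HD : 0 <= D).
  { unfold D. assert (0 <= 4 * alpha_nu / (T ^ 2 * beta_mu)).
    apply Rdiv_le_0_compat; [lra| apply Rmult_lt_0_compat; lra]. nra. }
  assert (Hw := sqrt_pos D). assert (Hw2 := sqrt_sqrt D HD).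
  set (w := sqrt D) in *.
  assert (HB : 0 < B).
  { unfold B. assert (0 < L / (T ^ 2 * beta_mu * alpha_nu)).
    apply Rdiv_lt_0_compat; [lra| repeat apply Rmult_lt_0_compat; lra]. lra. }
  assert (Q : D <= (2 * z + B) ^ 2).
  { unfold D, B.
    apply Rmult_le_reg_r with (T ^ 2 * beta_mu * alpha_nu).
    repeat apply Rmult_lt_0_compat; lra.
    replace (((alpha_nu + L / (T ^ 2 * beta_mu * alpha_nu)) ^ 2 + 4 * alpha_nu / (T ^ 2 * beta_mu)) *
              (T ^ 2 * beta_mu * alpha_nu))
      with ((T ^ 2 * beta_mu * alpha_nu ^ 2 + L) ^ 2 / (T ^ 2 * beta_mu * alpha_nu) + 4 * alpha_nu ^ 2)
      by (field; repeat split; lra).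
    replace ((2 * z + (alpha_nu + L / (T ^ 2 * beta_mu * alpha_nu))) ^ 2 * (T ^ 2 * beta_mu * alpha_nu))
      with ((T ^ 2 * beta_mu * alpha_nu ^ 2 + L) ^ 2 / (T ^ 2 * beta_mu * alpha_nu)
            + 4 * (T ^ 2 * beta_mu * alpha_nu * z ^ 2 + (T ^ 2 * beta_mu * alpha_nu ^ 2 + L) * z))
      by (field; repeat split; lra).
    lra. }
  assert (w <= 2 * z + B) by nra.
  unfold B in H. rewrite Hab.
  replace (L / (2 * T ^ 2 * alpha_nu * beta_mu)) with (/2 * (L / (T ^ 2 * beta_mu * alpha_nu)))
    by (field; repeat split; lra).
  lra.
- set (D := alpha_nu ^ 2 + 4 * alpha_nu / (T ^ 2 * beta_mu)).
  assert (HD : 0 <= D).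
  { unfold D. assert (0 <= 4 * alpha_nu / (T ^ 2 * beta_mu)).
    apply Rdiv_le_0_compat; [lra| apply Rmult_lt_0_compat; lra]. nra. }
  assert (Hw := sqrt_pos D). assert (Hw2 := sqrt_sqrt D HD).
  set (w := sqrt D) in *.
  assert (Q : (2 * z + alpha_nu) ^ 2 <= D).
  { unfold D. apply Rmult_le_reg_r with (T ^ 2 * beta_mu). apply Rmult_lt_0_compat; lra.
    replace ((alpha_nu ^ 2 + 4 * alpha_nu / (T ^ 2 * beta_mu)) * (T ^ 2 * beta_mu))
      with (alpha_nu ^ 2 * (T ^ 2 * beta_mu) + 4 * alpha_nu) by (field; lra).
    nra. }
  assert (2 * z + alpha_nu <= w) by nra.
  rewrite Hab. lra.
Qed.
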